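(* Let $n\ge1$ and $s\in D^n$. Then $\sum_{i=1}^{n}L_i\le\left\lfloor\frac{(n+1)^2}{4}\right\rfloor$.
   Context: Let $D$ be a commutative integral domain with $1\neq 0$. For $s=(s_1,\dots,s_n)\in D^n$, a polynomial $f\in D[x]$ annihilates $s$ if $f=0$, or $d=\deg f\ge0$ and $\sum_{k=0}^{d}f_ks_{j-d+k}=0$ for all $d+1\le j\le n$. The linear complexity $L(s)$ is the least degree of a nonzero annihilator of $s$, and $L_i=L(s_1,\dots,s_i)$. *)

(* Defs.v *)
From mathcomp Require Import all_boot all_order all_algebra.
Set Implicit Arguments. Unset Strict Implicit. Unset Printing Implicit Defensive.
Import GRing.Theory.
Local Open Scope ring_scope.

(* A finite sequence s = (s_1,...,s_n) in D^n is a [seq D] of size n;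
   s_j (1-indexed) is s`_(j-1).  For f with d = deg f = (size f).-1,
   f annihilates s iff f = 0 or for all d+1 <= j <= n,
   sum_{k=0}^d f_k s_{j-d+k} = 0.  With j' = j - 1 ranging over d <= j' < n,
   s_{j-d+k} = s`_(j'-d+k). *)
Definition annihilates (D : idomainType) (f : {poly D}) (s : seq D) : Prop :=
  f = 0 \/
  (forall j : nat, ((size f).-1 <= j)%N -> (j < size s)%N ->
     \sum_(k < (size f).-1.+1) f`_k * s`_(j - (size f).-1 + k) = 0).

(* is_linear_complexity s L : L is the least degree of a nonzero
   annihilator of s, i.e. L = L(s).  (Such L exists -- 'X^(size s) is a
   nonzero annihilator -- and is clearly unique.) *)
Definition is_linear_complexity (D : idomainType) (s : seq D) (L : nat) : Prop :=
  (exists f : {poly D}, f != 0 /\ (size f).-1 = L /\ annihilates f s) /\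
  (forall f : {poly D}, f != 0 -> annihilates f s -> (L <= (size f).-1)%N).

(* Main.v *)
Require Import Defs.
From Stdlib Require Import Lia PeanoNat.
From mathcomp Require Import all_boot all_order all_algebra.
Set Implicit Arguments. Unset Strict Implicit. Unset Printing Implicit Defensive.
Import GRing.Theory.

Ltac conv := repeat match goal with H : is_true (leq _ _) |- _ => move/leP: H => H end;
  try (apply/leP);
  repeat match goal with H : le _ _ |- _ => revert H | H : @eq nat _ _ |- _ => revert H end;
  rewrite -?plusE -?minusE -?multE; intros.
Ltac slia := conv; lia.

Lemma ar2 l N T l' : l <= N -> l <= l' -> l' <= maxn l (N.+1 - l) -> T <= l*(N.+1 - l) -> T + l' <= l' * (N.+2 - l').
Proof.
move=> h1 h2 h3 h4.
move: h3; rewrite /maxn; case: ltnP => h5 h6.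
- have [a Ha] : exists a, l' = l + a by exists (l' - l); slia.
  have [b Hb] : exists b, N.+1 = l + l' + b by exists (N.+1 - l - l'); slia.
  subst l'. have -> : N.+2 - (l + a) = l + b + 1 by slia.
  have E : N.+1 - l = l + a + b by slia. rewrite E in h4. conv. nia.
- have -> : l' = l by slia.
  have [b Hb] : exists b, N.+1 = l + b by exists (N.+1 - l); slia.
  have -> : N.+2 - l = b + 1 by slia.
  have E : N.+1 - l = b by slia. rewrite E in h4. conv. nia.
Qed.
Lemma ar3 l m : l <= m -> l * (m - l) <= expn m 2 %/ 4.
Proof.
move=> h; rewrite leq_divRL //.
have [b Hb] : exists b, m = l + b by exists (m - l); slia.
subst m. have -> : l + b - l = b by slia.
rewrite -mulnn. conv. clear h.
have [c [Hc|Hc]] : exists c, b = (l + c)%coq_nat \/ l = (b + c)%coq_nat.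
  case: (Nat.le_ge_cases l b) => h; [exists (b - l)%coq_nat; left | exists (l - b)%coq_nat; right]; lia.
all: subst; nia.
Qed.

Section Helpers.
Local Open Scope ring_scope.

Definition E (D : idomainType) (s : seq D) (p : {poly D}) (d j : nat) : D :=
  \sum_(k < d.+1) p`_k * s`_(j - d + k).

Definition ann (D : idomainType) (s : seq D) (p : {poly D}) (N : nat) : Prop :=
  forall j, ((size p).-1 <= j)%N -> (j < N)%N -> E s p (size p).-1 j = 0.

Lemma E_lin (D : idomainType) (s : seq D) (p q : {poly D}) a b d j :
  E s (a *: p - b *: q) d j = a * E s p d j - b * E s q d j.
Proof.
rewrite /E !mulr_sumr -sumrB; apply eq_bigr => k _.
by rewrite coefB !coefZ mulrBl !mulrA.
Qed.

Lemma E_widen (D : idomainType) (s : seq D) (p : {poly D}) M d j :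
  (size p <= M.+1)%N -> (M <= d)%N -> (d <= j)%N -> E s p d j = E s p M (j - (d - M)).
Proof.
move=> hs hM hd; rewrite /E.
rewrite -(big_mkord xpredT (fun k => p`_k * s`_(j - d + k))).
rewrite -(big_mkord xpredT (fun k => p`_k * s`_(j - (d - M) - M + k))).
rewrite (big_cat_nat _ (n := M.+1)) //=.
rewrite [X in _ + X = _]big1_seq ?addr0; last first.
  move=> k /andP[_]; rewrite mem_index_iota => /andP[hk _]; rewrite nth_default ?mul0r //.
  exact: leq_trans hs hk.
apply: eq_bigr => k _; congr (_ * s`_ _); slia.
Qed.

Lemma E_mulX (D : idomainType) (s : seq D) (p : {poly D}) a d j :
  (a <= d)%N -> (d <= j)%N -> E s (p * 'X^a) d j = E s p (d - a) j.
Proof.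
move=> ha hd; rewrite /E.
rewrite -(big_mkord xpredT (fun k => (p * 'X^a)`_k * s`_(j - d + k))).
rewrite -(big_mkord xpredT (fun k => p`_k * s`_(j - (d - a) + k))).
rewrite (big_cat_nat _ (n := a)) //=; last by rewrite ltnW // ltnS.
rewrite [X in X + _ = _]big1_seq ?add0r; last first.
  by move=> k /andP[_]; rewrite mem_index_iota => /andP[_ hk]; rewrite coefMXn hk mul0r.
rewrite -{1}(add0n a) big_addn subSn //.
apply: eq_bigr => k _.
rewrite coefMXn ltnNge leq_addl /= addnK; congr (_ * s`_ _); slia.
Qed.

Lemma ar4 x N r j : (x + (N - r) <= j -> j < N -> r < N -> x <= j - (N - r) /\ j - (N - r) < r)%N.
Proof. move=> h1 h2 h3; split; slia. Qed.

Lemma combine (D : idomainType) (s : seq D) (f g : {poly D}) N r :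
  f != 0 -> g != 0 -> ann s f N -> ann s g r -> ((size g).-1 <= r)%N -> (r < N)%N ->
  E s g (size g).-1 r != 0 -> ((size g).-1 + (size f).-1 <= r.+1)%N ->
  exists h : {poly D}, h != 0 /\ (size h).-1 = maxn (size f).-1 (N.+1 - (size f).-1)
     /\ ann s h N.+1.
Proof.
move=> nf ng af ag gr rN dg glt.
have sf : size f = (size f).-1.+1 by rewrite prednK // size_poly_gt0.
have sg : size g = (size g).-1.+1 by rewrite prednK // size_poly_gt0.
move: af ag dg glt gr sf sg.
set l := (size f).-1; set l0 := (size g).-1 => af ag dg glt gr sf sg.
set Dm := maxn l (N.+1 - l).
have lD : (l <= Dm)%N := leq_maxl _ _.
have l0D : (l0 + (N - r) <= Dm)%N.
  apply: leq_trans (leq_maxr _ _); slia.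
clearbody Dm.
set c := (Dm - (l0 + (N - r)))%N.
set d := E s f l N; set d' := E s g l0 r.
have s1 : size (d' *: (f * 'X^(Dm - l))) = Dm.+1.
  rewrite size_scale // size_mulXn // sf; slia.
have s2 : (size (- (d *: (g * 'X^c))) < Dm.+1)%N.
  rewrite size_opp; apply: leq_ltn_trans (size_scale_leq _ _) _.
  rewrite size_mulXn // sg /c; slia.
exists (d' *: (f * 'X^(Dm - l)) - d *: (g * 'X^c)).
have sh : size (d' *: (f * 'X^(Dm - l)) - d *: (g * 'X^c)) = Dm.+1.
  by rewrite size_polyDl s1.
split; first by rewrite -size_poly_gt0 sh.
split; first by rewrite sh.
move=> j; rewrite sh /= => hj hjN.
rewrite E_lin E_mulX ?leq_subr // E_mulX ?leq_subr //.

rewrite subKn // subKn //.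
rewrite (@E_widen _ s g l0 (l0 + (N - r)) j); last 3 first.
  by rewrite sg.
  exact: leq_addr.
  exact: leq_trans l0D hj.
rewrite addKn.
move: hjN. rewrite ltnS leq_eqVlt => /orP[/eqP hjN | hjN].
  rewrite hjN (subKn (ltnW rN)) /d /d'. by rewrite mulrC subrr.
have [h1 h2] := ar4 (leq_trans l0D hj) hjN rN.
have e1 : E s f l j = 0 by apply: af => //; apply: leq_trans lD hj.
have e2 : E s g l0 (j - (N - r)) = 0 by apply: ag.
by rewrite e1 e2 !mulr0 subrr.
Qed.

Lemma ann_ext (D : idomainType) (s : seq D) (f : {poly D}) N :
  ann s f N -> ((size f).-1 <= N)%N -> E s f (size f).-1 N = 0 -> ann s f N.+1.
Proof.
move=> a _ e j hj; rewrite ltnS leq_eqVlt => /orP[/eqP -> //|]; exact: a.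
Qed.

Lemma ann_mono (D : idomainType) (s : seq D) (f : {poly D}) N :
  ann s f N.+1 -> ann s f N.
Proof. by move=> a j hj hN; apply: a => //; apply: ltnW. Qed.

Lemma XN_ann (D : idomainType) (s : seq D) N : ann s 'X^N N.
Proof. by move=> j; rewrite size_polyXn /= => h1 h2; move: (leq_ltn_trans h1 h2); rewrite ltnn. Qed.

Lemma E1 (D : idomainType) (s : seq D) j : E s 1 0 j = s`_j.
Proof. by rewrite /E big_ord1 coef1 /= mul1r subn0 addn0. Qed.

Lemma one_ann (D : idomainType) (s : seq D) N : (forall j, (j < N)%N -> s`_j = 0) -> ann s 1 N.
Proof. by move=> h j; rewrite size_poly1 /= => _ hj; rewrite E1 h. Qed.

Definition W (D : idomainType) (s : seq D) (lc : nat -> nat) N :=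
  (forall j, (j < N)%N -> s`_j = 0) \/
  exists r (g : {poly D}), (r < N)%N /\ g != 0 /\ ((size g).-1 <= r)%N /\ ann s g r /\
     E s g (size g).-1 r != 0 /\ ((size g).-1 + lc N <= r.+1)%N.

Definition LC (D : idomainType) (s : seq D) (lc : nat -> nat) n :=
  forall N, (N <= n)%N ->
   (exists f : {poly D}, f != 0 /\ (size f).-1 = lc N /\ ann s f N) /\
   (forall f : {poly D}, f != 0 -> ann s f N -> (lc N <= (size f).-1)%N).

Lemma lc_leN (D : idomainType) (s : seq D) lc n N : LC s lc n -> (N <= n)%N -> (lc N <= N)%N.
Proof.
move=> H hN; have := (H N hN).2 'X^N; rewrite size_polyXn /=; apply.
  by rewrite -size_poly_gt0 size_polyXn.
exact: XN_ann.
Qed.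

Lemma lc_mono (D : idomainType) (s : seq D) lc n N : LC s lc n -> (N < n)%N -> (lc N <= lc N.+1)%N.
Proof.
move=> H hN; have [[h [hn [hs ha]]] _] := H N.+1 hN.
rewrite -hs; apply: (H N (ltnW hN)).2 hn (ann_mono ha).
Qed.

Lemma step (D : idomainType) (s : seq D) lc n N : LC s lc n -> (N < n)%N -> W s lc N ->
  W s lc N.+1 /\ (lc N.+1 <= maxn (lc N) (N.+1 - lc N))%N.
Proof.
move=> H hN hW.
have hN' := ltnW hN.
have [[f [nf [sf af]]] minN] := H N hN'.
have [_ minN1] := H N.+1 hN.
have lcle := lc_leN H hN'.
case: hW => [Z | [r [g [rN [ng [gr [ag [dg glt]]]]]]]].
  have l0 : lc N = 0%N.
    apply/eqP; rewrite -leqn0; have := minN 1; rewrite size_poly1; apply => //.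
      exact: oner_neq0.
    exact: one_ann.
  rewrite l0 max0n subn0.
  have [sN|sN] := eqVneq (s`_N) 0.
    have Z1 : forall j, (j < N.+1)%N -> s`_j = 0.
      by move=> j; rewrite ltnS leq_eqVlt => /orP[/eqP -> //|]; exact: Z.
    split; first by left.
    have := minN1 1; rewrite size_poly1 /=; move=> h; apply: leq_trans (h _ _) _ => //.
      exact: oner_neq0.
    exact: one_ann.
  split; last exact: lc_leN H hN.
  right; exists N, 1; split; first done.
  split; first exact: oner_neq0.
  split; first by rewrite size_poly1.
  split; first exact: one_ann.
  split; first by rewrite size_poly1 E1.
  by rewrite size_poly1 add0n; exact: lc_leN H hN.
have [e0|e0] := eqVneq (E s f (size f).-1 N) 0.
  have af1 : ann s f N.+1 by apply: ann_ext => //; rewrite sf; exact: lc_leN H hN'.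
  have hle := minN1 f nf af1; rewrite sf in hle.
  split; last by apply: leq_trans hle (leq_maxl _ _).
  right; exists r, g; split; first by rewrite ltnS ltnW. do 4 (split; first done); apply: leq_trans glt; rewrite leq_add2l.
  by apply: leq_trans hle _.
have gl : ((size g).-1 + (size f).-1 <= r.+1)%N.
  rewrite sf; apply: leq_trans glt; rewrite leq_add2l; exact: leqnn.
have [h [nh [sh ah]]] := combine nf ng af ag gr rN dg gl.
have hle := minN1 h nh ah; rewrite sh sf in hle.
split => //.
case: (leqP (N.+1 - lc N) (lc N)) => hc.
  right; exists r, g; split; first by rewrite ltnS ltnW. do 4 (split; first done); apply: leq_trans glt; rewrite leq_add2l.
  by apply: leq_trans hle _; rewrite geq_max leqnn hc.
rewrite (maxn_idPr (ltnW hc)) in hle.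
right; exists N, f; split; first exact: ltnSn.
split; first done.
split; first by rewrite sf.
split; first done.
split; first done.
rewrite sf; apply: leq_trans (leq_add (leqnn _) hle) _.
by rewrite subnKC // leqW.
Qed.

Lemma ann_take (D : idomainType) (s : seq D) (f : {poly D}) N : (N <= size s)%N ->
  annihilates f (take N s) <-> (f = 0 \/ ann s f N).
Proof.
move=> hN; rewrite /annihilates size_takel //.
have eqE : forall j, ((size f).-1 <= j)%N -> (j < N)%N ->
   \sum_(k < (size f).-1.+1) f`_k * (take N s)`_(j - (size f).-1 + k) = E s f (size f).-1 j.
  rewrite /E; move: (size f).-1 => d j h1 h2; apply eq_bigr => k _; rewrite nth_take //.
  have Hk := ltn_ord k; slia.
split => [[->|h]|[->|h]]; [by left | right => j h1 h2; rewrite -eqE // h // | by left | right => j h1 h2; rewrite eqE //; exact: h].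

Qed.

Lemma Wall (D : idomainType) (s : seq D) lc n : LC s lc n -> forall N, (N <= n)%N -> W s lc N.
Proof.
move=> H; elim => [|N IH] hN; first by left.
exact: (step H hN (IH (ltnW hN))).1.
Qed.

Lemma pot (D : idomainType) (s : seq D) lc n : LC s lc n -> forall N, (N <= n)%N ->
  (\sum_(1 <= i < N.+1) lc i <= lc N * (N.+1 - lc N))%N.
Proof.
move=> H; elim => [|N IH] hN; first by rewrite big_geq.
rewrite big_nat_recr //=.
have [_ hs] := step H hN (Wall H (ltnW hN)).
apply: ar2 (IH (ltnW hN)) => //.
- exact: lc_leN H (ltnW hN).
- exact: lc_mono H hN.
Qed.

End Helpers.

Theorem mainTheorem12 (D : idomainType) (n : nat) (s : seq D) (L : nat -> nat) :
  (1 <= n)%N -> size s = n ->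
  (forall i : nat, (1 <= i <= n)%N -> is_linear_complexity (take i s) (L i)) ->
  (\sum_(1 <= i < n.+1) L i <= (n.+1 ^ 2) %/ 4)%N.
Proof.
move=> n1 sz H.
pose lc i := if i is 0 then 0%N else L i.
have HLC : LC s lc n.
  move=> [|N] hN.
    split.
      exists (1%R : {poly D}); split; first exact: oner_neq0.
      by rewrite size_poly1; split => // j _.
    by move=> f _ _.
  have [[f [nf [sf af]]] minf] := H N.+1 hN.
  have hs : (N.+1 <= size s)%N by rewrite sz.
  split.
    exists f; split => //; split => //.
    by case: (ann_take f hs) => h _; case: (h af) => // e; rewrite e eqxx in nf.
  move=> g ng ag; apply: minf => //; apply/(ann_take g hs); by right.
have -> : (\sum_(1 <= i < n.+1) L i = \sum_(1 <= i < n.+1) lc i)%N.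
  by apply: eq_big_nat => i /andP[hi _]; case: i hi.
apply: leq_trans (pot HLC (leqnn n)) _.
apply: ar3; apply: leqW; exact: lc_leN HLC (leqnn n).
Qed.
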